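(* Let $\mathcal{X}_1,\mathcal{X}_2$ be non-empty sets, $\mathcal{B}_i\subseteq\mathcal{P}(\mathcal{X}_i)\setminus\{\emptyset\}$ and $\underline{P}_i$ a coherent conditional lower prevision on $\mathcal{C}_i\subseteq\mathcal{C}(\mathcal{X}_i)$ for $i\in\{1,2\}$, and let $\mathcal{C}\subseteq\mathcal{C}(\mathcal{X}_1\times\mathcal{X}_2)$ be an independent domain containing $\mathcal{C}_1$ and $\mathcal{C}_2$. Then the restriction of $\underline{P}_1\otimes\underline{P}_2$ to $\mathcal{C}$ is an independent product of $\underline{P}_1$ and $\underline{P}_2$.
   Context: Gambles on a non-empty set $\mathcal{X}$ are bounded real functions; $\mathcal{G}(\mathcal{X})$ is the set of gambles, $\mathcal{G}_{>0}(\mathcal{X})$ the non-negative non-zero gambles, $\mathbb{I}_A$ the indicator of $A$. For $\mathcal{A}\subseteq\mathcal{G}(\mathcal{X})$: $\mathrm{posi}(\mathcal{A}):=\{\sum_{i=1}^n\lambda_if_i\colon n\in\mathbb{N},\lambda_i>0,f_i\in\mathcal{A}\}$, $\mathcal{E}(\mathcal{A}):=\mathrm{posi}(\mathcal{A}\cup\mathcal{G}_{>0}(\mathcal{X}))$. A coherent set of desirable gambles $\mathcal{D}\subseteq\mathcal{G}(\mathcal{X})$ satisfies: (D1) $f\geq0,f\neq0\Rightarrow f\in\mathcal{D}$; (D2) $f\in\mathcal{D},\lambda>0\Rightarrow\lambda f\in\mathcal{D}$; (D3) $f,g\in\mathcal{D}\Rightarrow f+g\in\mathcal{D}$; (D4)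 $f\leq0\Rightarrow f\notin\mathcal{D}$. $\mathcal{C}(\mathcal{X}):=\mathcal{G}(\mathcal{X})\times(\mathcal{P}(\mathcal{X})\setminus\{\emptyset\})$; a conditional lower prevision on $\mathcal{C}\subseteq\mathcal{C}(\mathcal{X})$ is a map $(f,B)\mapsto\underline{P}(f\vert B)\in\mathbb{R}\cup\{\pm\infty\}$. For $\mathcal{D}\subseteq\mathcal{G}(\mathcal{X})$, $\underline{P}_{\mathcal{D}}(f\vert B):=\sup\{\mu\in\mathbb{R}\colon[f-\mu]\mathbb{I}_B\in\mathcal{D}\}$. $\underline{P}$ is coherent if $\underline{P}=\underline{P}_{\mathcal{D}}$ on its domain for some coherent set of desirable gambles $\mathcal{D}$. For coherent $\underline{P}$ on $\mathcal{C}$, $\mathcal{E}(\underline{P}):=\mathcal{E}(\{[f-\mu]\mathbb{I}_B\colon(f,B)\in\mathcal{C},\mu<\underline{P}(f\vert B)\})$. Gambles/events on $\mathcal{X}_i$ are identified with their cylindrical extensions to $\mathcal{X}_1\times\mathcal{X}_2$ ($B\subseteq\mathcal{X}_1$ with $B\times\mathcal{X}_2$, etc.). For coherent sets of desirable gambles $\mathcal{D}_1,\mathcal{D}_2$: $\mathcal{D}_1\otimes\mathcal{D}_2:=\mathcal{E}(\mathcal{A}_{1\to2}\cup\mathcal{A}_{2\to1})$, $\mathcal{A}_{1\to2}:=\{f_2(X_2)\mathbb{I}_{B_1}(X_1)\colon f_2\in\mathcal{D}_2,B_1\in\mathcal{B}_1\cup\{\mathcal{X}_1\}\}$, $\mathcal{A}_{2\to1}:=\{f_1(X_1)\mathbb{I}_{B_2}(X_2)\colon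 f_1\in\mathcal{D}_1,B_2\in\mathcal{B}_2\cup\{\mathcal{X}_2\}\}$; $(\underline{P}_1\otimes\underline{P}_2)(f\vert B):=\underline{P}_{\mathcal{D}}(f\vert B)$ for $(f,B)\in\mathcal{C}(\mathcal{X}_1\times\mathcal{X}_2)$, $\mathcal{D}=\mathcal{E}(\underline{P}_1)\otimes\mathcal{E}(\underline{P}_2)$. A domain $\mathcal{C}\subseteq\mathcal{C}(\mathcal{X}_1\times\mathcal{X}_2)$ is independent if for all $\{i,j\}=\{1,2\}$, $(f_i,B_i)\in\mathcal{C}(\mathcal{X}_i)$ and $B_j\in\mathcal{B}_j$: $(f_i,B_i)\in\mathcal{C}\iff(f_i,B_i\cap B_j)\in\mathcal{C}$. A coherent $\underline{P}$ on an independent domain $\mathcal{C}$ is epistemically independent if $\underline{P}(f_i\vert B_i)=\underline{P}(f_i\vert B_i\cap B_j)$ for all $\{i,j\}=\{1,2\}$, all $(f_i,B_i)\in\mathcal{C}$ with $f_i,B_i$ on $\mathcal{X}_i$, and all $B_j\in\mathcal{B}_j$. An independent product of $\underline{P}_1,\underline{P}_2$ is an epistemically independent coherent conditional lower prevision on $\mathcal{C}$ that coincides with $\underline{P}_i$ on $\mathcal{C}_i$ for $i=1,2$. *)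

(* Defs.v *)
From Stdlib Require Import Reals Bool.
From Coquelicot Require Import Rbar Lub.
Open Scope R_scope.

Definition gamble {X : Type} (f : X -> R) : Prop :=
  exists M, forall x, Rabs (f x) <= M.

Definition pos_gamble {X : Type} (f : X -> R) : Prop :=
  gamble f /\ (forall x, 0 <= f x) /\ (exists x, f x <> 0).

Definition nonempty_event {X : Type} (B : X -> bool) : Prop :=
  exists x, B x = true.

Definition indic {X : Type} (B : X -> bool) (x : X) : R :=
  if B x then 1 else 0.

Fixpoint rsum (n : nat) (F : nat -> R) : R :=
  match n with O => 0 | S m => rsum m F + F m end.

Definition posi {X : Type} (A : (X -> R) -> Prop) : (X -> R) -> Prop :=
  fun g => exists (n : nat) (lam : nat -> R) (fs : nat -> X -> R),
    (1 <= n)%nat /\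
    (forall i, (i < n)%nat -> 0 < lam i /\ A (fs i)) /\
    (forall x, g x = rsum n (fun i => lam i * fs i x)).

Definition Ext {X : Type} (A : (X -> R) -> Prop) : (X -> R) -> Prop :=
  posi (fun f => A f \/ pos_gamble f).

Definition coherent_D {X : Type} (D : (X -> R) -> Prop) : Prop :=
  (forall f, D f -> gamble f) /\
  (forall f, gamble f -> (forall x, 0 <= f x) -> (exists x, f x <> 0) -> D f) /\
  (forall f lam, D f -> 0 < lam -> D (fun x => lam * f x)) /\
  (forall f g, D f -> D g -> D (fun x => f x + g x)) /\
  (forall f, (forall x, f x <= 0) -> ~ D f).

Definition cgamble {X : Type} (f : X -> R) (mu : R) (B : X -> bool) : X -> R :=
  fun x => (f x - mu) * indic B x.

(* P_D(f|B) := sup { mu : [f-mu] I_B ∈ D } (sup of empty set = -oo) *)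
Definition lowprev_D {X : Type} (D : (X -> R) -> Prop) (f : X -> R) (B : X -> bool)
  : Rbar := Lub_Rbar (fun mu => D (cgamble f mu B)).

Definition in_CX {X : Type} (f : X -> R) (B : X -> bool) : Prop :=
  gamble f /\ nonempty_event B.

Definition sub_CX {X : Type} (C : (X -> R) -> (X -> bool) -> Prop) : Prop :=
  forall f B, C f B -> in_CX f B.

Definition coherent_lp {X : Type} (C : (X -> R) -> (X -> bool) -> Prop)
  (P : (X -> R) -> (X -> bool) -> Rbar) : Prop :=
  exists D, coherent_D D /\ forall f B, C f B -> P f B = lowprev_D D f B.

Definition E_of_P {X : Type} (C : (X -> R) -> (X -> bool) -> Prop)
  (P : (X -> R) -> (X -> bool) -> Rbar) : (X -> R) -> Prop :=
  Ext (fun g => exists f B mu, C f B /\ Rbar_lt (Finite mu) (P f B)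
                               /\ g = cgamble f mu B).

Definition ext1 {X1 X2 : Type} (f : X1 -> R) : X1 * X2 -> R := fun p => f (fst p).
Definition ext2 {X1 X2 : Type} (f : X2 -> R) : X1 * X2 -> R := fun p => f (snd p).
Definition eext1 {X1 X2 : Type} (B : X1 -> bool) : X1 * X2 -> bool := fun p => B (fst p).
Definition eext2 {X1 X2 : Type} (B : X2 -> bool) : X1 * X2 -> bool := fun p => B (snd p).
Definition erect {X1 X2 : Type} (B1 : X1 -> bool) (B2 : X2 -> bool) : X1 * X2 -> bool :=
  fun p => andb (B1 (fst p)) (B2 (snd p)).

Definition A12 {X1 X2 : Type} (B1s : (X1 -> bool) -> Prop) (D2 : (X2 -> R) -> Prop)
  : (X1 * X2 -> R) -> Prop :=
  fun g => exists f2 B1, D2 f2 /\ (B1s B1 \/ B1 = (fun _ => true)) /\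
           g = (fun p => f2 (snd p) * indic B1 (fst p)).

Definition A21 {X1 X2 : Type} (B2s : (X2 -> bool) -> Prop) (D1 : (X1 -> R) -> Prop)
  : (X1 * X2 -> R) -> Prop :=
  fun g => exists f1 B2, D1 f1 /\ (B2s B2 \/ B2 = (fun _ => true)) /\
           g = (fun p => f1 (fst p) * indic B2 (snd p)).

Definition dprod {X1 X2 : Type} (B1s : (X1 -> bool) -> Prop) (B2s : (X2 -> bool) -> Prop)
  (D1 : (X1 -> R) -> Prop) (D2 : (X2 -> R) -> Prop) : (X1 * X2 -> R) -> Prop :=
  Ext (fun g => A12 B1s D2 g \/ A21 B2s D1 g).

Definition lp_prod {X1 X2 : Type} (B1s : (X1 -> bool) -> Prop) (B2s : (X2 -> bool) -> Prop)
  (C1 : (X1 -> R) -> (X1 -> bool) -> Prop) (P1 : (X1 -> R) -> (X1 -> bool) -> Rbar)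
  (C2 : (X2 -> R) -> (X2 -> bool) -> Prop) (P2 : (X2 -> R) -> (X2 -> bool) -> Rbar)
  : (X1 * X2 -> R) -> (X1 * X2 -> bool) -> Rbar :=
  fun f B => lowprev_D (dprod B1s B2s (E_of_P C1 P1) (E_of_P C2 P2)) f B.

Definition indep_domain {X1 X2 : Type} (B1s : (X1 -> bool) -> Prop) (B2s : (X2 -> bool) -> Prop)
  (C : (X1 * X2 -> R) -> (X1 * X2 -> bool) -> Prop) : Prop :=
  (forall f1 B1 B2, in_CX f1 B1 -> B2s B2 ->
     (C (ext1 f1) (eext1 B1) <-> C (ext1 f1) (erect B1 B2))) /\
  (forall f2 B2 B1, in_CX f2 B2 -> B1s B1 ->
     (C (ext2 f2) (eext2 B2) <-> C (ext2 f2) (erect B1 B2))).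

Definition epist_indep {X1 X2 : Type} (B1s : (X1 -> bool) -> Prop) (B2s : (X2 -> bool) -> Prop)
  (C : (X1 * X2 -> R) -> (X1 * X2 -> bool) -> Prop)
  (P : (X1 * X2 -> R) -> (X1 * X2 -> bool) -> Rbar) : Prop :=
  sub_CX C /\ indep_domain B1s B2s C /\ coherent_lp C P /\
  (forall f1 B1 B2, in_CX f1 B1 -> C (ext1 f1) (eext1 B1) -> B2s B2 ->
     P (ext1 f1) (eext1 B1) = P (ext1 f1) (erect B1 B2)) /\
  (forall f2 B2 B1, in_CX f2 B2 -> C (ext2 f2) (eext2 B2) -> B1s B1 ->
     P (ext2 f2) (eext2 B2) = P (ext2 f2) (erect B1 B2)).

Definition indep_product {X1 X2 : Type} (B1s : (X1 -> bool) -> Prop) (B2s : (X2 -> bool) -> Prop)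
  (C1 : (X1 -> R) -> (X1 -> bool) -> Prop) (P1 : (X1 -> R) -> (X1 -> bool) -> Rbar)
  (C2 : (X2 -> R) -> (X2 -> bool) -> Prop) (P2 : (X2 -> R) -> (X2 -> bool) -> Rbar)
  (C : (X1 * X2 -> R) -> (X1 * X2 -> bool) -> Prop)
  (P : (X1 * X2 -> R) -> (X1 * X2 -> bool) -> Rbar) : Prop :=
  epist_indep B1s B2s C P /\
  (forall f B, C1 f B -> P (ext1 f) (eext1 B) = P1 f B) /\
  (forall f B, C2 f B -> P (ext2 f) (eext2 B) = P2 f B).

(* Main.v *)
Require Import Defs.
From Stdlib Require Import Reals Lra Lia List Classical ClassicalEpsilon FunctionalExtensionality.
From Coquelicot Require Import Rbar Lub.
Open Scope R_scope.

Lemma rsum_ext n F G : (forall i, (i < n)%nat -> F i = G i) -> rsum n F = rsum n G.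
Proof. induction n; simpl; intros H; auto. rewrite IHn by (intros; apply H; lia). rewrite H by lia. auto. Qed.

Lemma rsum_plus n F G : rsum n (fun i => F i + G i) = rsum n F + rsum n G.
Proof. induction n; simpl; [lra|]. rewrite IHn. lra. Qed.

Lemma rsum_scal n k F : rsum n (fun i => k * F i) = k * rsum n F.
Proof. induction n; simpl; [lra|]. rewrite IHn. lra. Qed.

Lemma rsum_le n F G : (forall i, (i < n)%nat -> F i <= G i) -> rsum n F <= rsum n G.
Proof. induction n; simpl; intros H; [lra|]. assert (H1:=H n (Nat.lt_succ_diag_r n)).
 assert (rsum n F <= rsum n G) by (apply IHn; intros; apply H; lia). lra. Qed.

Lemma rsum_zero n F : (forall i, (i < n)%nat -> F i = 0) -> rsum n F = 0.
Proof. intros H. transitivity (rsum n (fun _ => 0)). apply rsum_ext; auto.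
 induction n; simpl; auto. rewrite IHn; [lra|]. intros; apply H; lia. Qed.

Lemma rsum_nonneg n F : (forall i, (i < n)%nat -> 0 <= F i) -> 0 <= rsum n F.
Proof. intros H. rewrite <- (rsum_zero n (fun _ => 0)) by auto. apply rsum_le; auto. Qed.

Lemma rsum_ge_term n F i : (forall j, (j < n)%nat -> 0 <= F j) -> (i < n)%nat -> F i <= rsum n F.
Proof. induction n; intros H Hi; [lia|]. simpl.
 destruct (Nat.eq_dec i n) as [->|Hne].
 - assert (0 <= rsum n F) by (apply rsum_nonneg; intros; apply H; lia). lra.
 - assert (F i <= rsum n F) by (apply IHn; [intros; apply H; lia | lia]).
   assert (0 <= F n) by (apply H; lia). lra. Qed.

Lemma rsum_pos n F i : (forall j, (j < n)%nat -> 0 <= F j) -> (i < n)%nat -> 0 < F i -> 0 < rsum n F.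
Proof. intros H Hi Hp. assert (F i <= rsum n F) by (apply rsum_ge_term; auto). lra. Qed.

Fixpoint lsum {X : Type} (L : list (R * X)) (f : X -> R) : R :=
  match L with nil => 0 | (v, x) :: L' => v * f x + lsum L' f end.

Lemma lsum_app {X} (L1 L2 : list (R * X)) f : lsum (L1 ++ L2) f = lsum L1 f + lsum L2 f.
Proof. induction L1 as [|[v x] L1 IH]; simpl; [lra|]. rewrite IH; lra. Qed.

Lemma lsum_flat_map {X Y} (tr : (R * Y) -> list (R * X)) (L : list (R * Y)) f :
  lsum (flat_map tr L) f = fold_right (fun e acc => lsum (tr e) f + acc) 0 L.
Proof. induction L as [|e L IH]; simpl; auto. rewrite lsum_app, IH. auto. Qed.

Lemma lsum_ext {X} (L : list (R * X)) f g : (forall x, f x = g x) -> lsum L f = lsum L g.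
Proof. intros H; induction L as [|[v x] L IH]; simpl; auto. rewrite IH, H; auto. Qed.

Lemma lsum_lin {X} (L : list (R * X)) a b f g h :
  lsum L (fun x => a * f x + b * g x + h x) = a * lsum L f + b * lsum L g + lsum L h.
Proof. induction L as [|[v x] L IH]; simpl; [lra|]. rewrite IH; ring. Qed.

Lemma lsum_le {X} (L : list (R * X)) f g : (forall v x, In (v, x) L -> 0 <= v) ->
  (forall x, f x <= g x) -> lsum L f <= lsum L g.
Proof. intros Hw H; induction L as [|[v x] L IH]; simpl; [lra|].
 assert (0 <= v) by (apply (Hw v x); left; auto).
 assert (lsum L f <= lsum L g) by (apply IH; intros; eapply Hw; right; eauto).
 assert (v * f x <= v * g x) by (apply Rmult_le_compat_l; auto). lra. Qed.

Lemma lsum_rsum {X} (L : list (R * X)) n (F : nat -> X -> R) :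
  lsum L (fun x => rsum n (fun i => F i x)) = rsum n (fun i => lsum L (F i)).
Proof. induction L as [|[v x] L IH]; simpl.
 - symmetry; apply rsum_zero; auto.
 - rewrite IH. rewrite <- rsum_scal, <- rsum_plus. auto. Qed.

Lemma min_pos n (F : nat -> R) : (forall i, (i < n)%nat -> 0 < F i) ->
  exists m, 0 < m /\ forall i, (i < n)%nat -> m <= F i.
Proof. induction n; intros H.
 - exists 1; split; [lra|intros; lia].
 - destruct IHn as [m [Hm Hmi]]; [intros; apply H; lia|].
   exists (Rmin m (F n)). split. apply Rmin_pos; auto; apply H; lia.
   intros i Hi. destruct (Nat.eq_dec i n) as [->|]. apply Rmin_r.
   eapply Rle_trans; [apply Rmin_l|]. apply Hmi; lia. Qed.

Lemma ville : forall n (X : Type) (a : nat -> X -> R),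
 (forall c : nat -> R, (forall i, (i<n)%nat -> 0 <= c i) -> (exists i, (i<n)%nat /\ 0 < c i) ->
    exists x, 0 < rsum n (fun i => c i * a i x)) ->
 exists L : list (R * X), (forall v x, In (v,x) L -> 0 <= v) /\ forall i, (i<n)%nat -> 0 < lsum L (a i).
Proof.
intros n; induction n as [|n IH]; intros X a H.
- exists nil. split; [simpl; tauto | intros; lia].
- pose (z := a n).
  assert (Hp0 : exists p0, 0 < z p0).
  { destruct (H (fun i => if Nat.eq_dec i n then 1 else 0)) as [x Hx].
    - intros i _; destruct Nat.eq_dec; lra.
    - exists n; split; [lia|]; destruct Nat.eq_dec; [lra|congruence].
    - exists x. simpl in Hx. rewrite rsum_zero in Hx. destruct (Nat.eq_dec n n); [|congruence]. unfold z; lra.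
      intros i Hi; destruct (Nat.eq_dec i n); [lia|]; ring. }
  destruct Hp0 as [p0 Hp0].
  pose (a' := fun i (y : X + (X * X)) => match y with
     | inl x => if Rle_dec 0 (z x) then a i x else 0
     | inr (p, q) => if Rlt_dec 0 (z p) then if Rlt_dec (z q) 0 then z p * a i q - z q * a i p else 0 else 0 end).
  destruct (IH (X + X*X)%type a') as [L' [HL'w HL']].
  { intros c Hc [i0 [Hi0 Hci0]].
    apply NNPP; intro Hno.
    assert (Hy : forall y, rsum n (fun i => c i * a' i y) <= 0).
    { intros y. apply Rnot_lt_le. intro Hlt. apply Hno. exists y; auto. }
    pose (G := fun x => rsum n (fun i => c i * a i x)).
    assert (F1 : forall x, 0 <= z x -> G x <= 0).
    { intros x Hx. specialize (Hy (inl x)). unfold G. rewrite (rsum_ext n _ (fun i => c i * a' i (inl x))); auto.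
      intros i _; unfold a'. destruct Rle_dec; [auto|lra]. }
    assert (F2 : forall p q, 0 < z p -> z q < 0 -> z p * G q - z q * G p <= 0).
    { intros p q Hp Hq. specialize (Hy (inr (p,q))).
      rewrite (rsum_ext _ _ (fun i => z p * (c i * a i q) + (- z q) * (c i * a i p))) in Hy.
      rewrite rsum_plus, !rsum_scal in Hy. unfold G. lra.
      intros i _. unfold a'. destruct Rlt_dec; [|lra]. destruct Rlt_dec; [|lra]. ring. }
    assert (Tb : forall q, z q < 0 -> forall p, 0 < z p -> G q / (- z q) <= - G p / z p).
    { intros q Hq p Hp. specialize (F2 p q Hp Hq).
      assert (E1 : G q / (- z q) * (- z q) = G q) by (field; lra).
      assert (E2 : - G p / z p * z p = - G p) by (field; lra).
      assert (0 < - z q * z p) by nra.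
      set (u := G q / (- z q)) in *. set (w := - G p / z p) in *. nra. }
    assert (Ht0 : exists t0, 0 <= t0 /\ forall x, G x + t0 * z x <= 0).
    { destruct (classic (exists q, z q < 0)) as [[q0 Hq0]|Hnq].
      - pose (T := fun t => exists q, z q < 0 /\ t = G q / (- z q)).
        destruct (completeness T) as [m [Hmub Hmlub]].
        + exists (- G p0 / z p0). intros t [q [Hq ->]]. apply Tb; auto.
        + exists (G q0 / (- z q0)); exists q0; auto.
        + exists (Rmax 0 m). split; [apply Rmax_l|]. intros x.
          destruct (Rlt_le_dec (z x) 0) as [Hzx|Hzx].
          * assert (Hu : G x / (- z x) <= m) by (apply Hmub; exists x; auto).
            assert (E1 : G x / (- z x) * (- z x) = G x) by (field; lra).
            assert (m <= Rmax 0 m) by apply Rmax_r.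
            set (u := G x / (- z x)) in *. nra.
          * destruct (Req_dec (z x) 0) as [Hz0|Hz0].
            { rewrite Hz0. assert (G x <= 0) by (apply F1; lra). lra. }
            assert (Hzp : 0 < z x) by lra.
            assert (Hw : m <= - G x / z x).
            { apply Hmlub. intros t [q [Hq ->]]. apply Tb; auto. }
            assert (HG : G x <= 0) by (apply F1; lra).
            assert (E2 : - G x / z x * z x = - G x) by (field; lra).
            assert (Hw0 : 0 <= - G x / z x).
            { unfold Rdiv. apply Rmult_le_pos; [lra|]. left; apply Rinv_0_lt_compat; auto. }
            assert (Rmax 0 m <= - G x / z x) by (apply Rmax_lub; auto).
            set (w := - G x / z x) in *. nra.
      - exists 0. split; [lra|]. intros x. assert (0 <= z x) by (apply Rnot_lt_le; intro; apply Hnq; eauto).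
        rewrite Rmult_0_l, Rplus_0_r. apply F1; auto. }
    destruct Ht0 as [t0 [Ht0 HGt]].
    destruct (H (fun i => if Nat.eq_dec i n then t0 else c i)) as [x Hx].
    + intros i Hi. destruct (Nat.eq_dec i n); auto. apply Hc; lia.
    + exists i0. split; [lia|]. destruct (Nat.eq_dec i0 n); [lia|auto].
    + simpl in Hx. rewrite (rsum_ext n _ (fun i => c i * a i x)) in Hx.
      * destruct (Nat.eq_dec n n); [|congruence]. specialize (HGt x). unfold G, z in *. lra.
      * intros i Hi. destruct (Nat.eq_dec i n); [lia|auto]. }
  pose (tr := fun (e : R * (X + X*X)) => let (v, y) := e in match y with
     | inl x => (if Rle_dec 0 (z x) then v else 0, x) :: nil
     | inr (p,q) => if Rlt_dec 0 (z p) then if Rlt_dec (z q) 0 then (v * z p, q) :: (v * - z q, p) :: nil else nil else nil end).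
  assert (Htr : forall L : list (R * (X + X * X)), (forall v y, In (v,y) L -> 0 <= v) ->
     (forall v x, In (v,x) (flat_map tr L) -> 0 <= v) /\
     (forall i, lsum (flat_map tr L) (a i) = lsum L (a' i)) /\ 0 <= lsum (flat_map tr L) z).
  { induction L as [|[v y] L IHL]; intros Hw.
    - simpl. split; [tauto|]. split; [auto|lra].
    - destruct IHL as [IH1 [IH2 IH3]]. { intros; eapply Hw; right; eauto. }
      assert (Hv : 0 <= v) by (eapply Hw; left; eauto).
      simpl flat_map. split; [|split].
      + intros v' x' Hin. apply in_app_or in Hin. destruct Hin as [Hin|Hin]; [|eauto].
        destruct y as [x|[p q]]; simpl in Hin.
        * destruct Hin as [Hin|[]]. inversion Hin; subst. match goal with |- context [Rle_dec ?a ?b] => destruct (Rle_dec a b) end; lra.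
        * destruct Rlt_dec; [|destruct Hin]. destruct Rlt_dec; [|destruct Hin].
          destruct Hin as [Hin|[Hin|[]]]; inversion Hin; subst; nra.
      + intros i. rewrite lsum_app, IH2. simpl lsum at 3. f_equal.
        destruct y as [x|[p q]]; simpl.
        * destruct Rle_dec; ring.
        * destruct Rlt_dec; [|simpl; ring]. destruct Rlt_dec; simpl; ring.
      + rewrite lsum_app. destruct y as [x|[p q]]; simpl;
        repeat match goal with |- context [Rle_dec ?a ?b] => destruct (Rle_dec a b)
                          | |- context [Rlt_dec ?a ?b] => destruct (Rlt_dec a b) end; simpl; nra. }
  destruct (Htr L' HL'w) as [HL0w [HL0a HL0z]].
  set (L0 := flat_map tr L') in *.
  destruct (min_pos n (fun i => lsum L0 (a i))) as [m [Hm Hmi]].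
  { intros i Hi. rewrite HL0a. apply HL'; auto. }
  pose (M := rsum n (fun i => Rabs (a i p0)) + 1).
  assert (HM : 0 < M).
  { unfold M. assert (0 <= rsum n (fun i => Rabs (a i p0))) by (apply rsum_nonneg; intros; apply Rabs_pos). lra. }
  pose (eps := m / M).
  assert (Heps : 0 < eps) by (unfold eps, Rdiv; apply Rmult_lt_0_compat; auto; apply Rinv_0_lt_compat; auto).
  assert (HepsM : eps * M = m) by (unfold eps; field; lra).
  exists ((eps, p0) :: L0). split.
  + intros v x [Hin|Hin]; [inversion Hin; lra| eauto].
  + intros i Hi. simpl. destruct (Nat.eq_dec i n) as [->|Hne].
    * fold z. nra.
    * assert (Hi' : (i < n)%nat) by lia.
      assert (Ha : Rabs (a i p0) < M).
      { unfold M. assert (Rabs (a i p0) <= rsum n (fun i => Rabs (a i p0))).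
        apply (rsum_ge_term n (fun i => Rabs (a i p0))); auto. intros; apply Rabs_pos. lra. }
      assert (H1 := Hmi i Hi'). simpl in H1.
      assert (H2 : - Rabs (a i p0) <= a i p0) by (pose proof (Rle_abs (- a i p0)) as HH; rewrite Rabs_Ropp in HH; lra).
      nra.
Qed.

Definition good {X : Type} (S : (X -> R) -> Prop) : Prop :=
  forall n (c : nat -> R) (fs : nat -> X -> R),
    (forall i, (i < n)%nat -> 0 <= c i /\ S (fs i)) ->
    (exists i, (i < n)%nat /\ 0 < c i) ->
    exists x, 0 < rsum n (fun i => c i * fs i x).

Lemma cone_comb {X : Type} (K : (X -> R) -> Prop) :
  (forall f g, K f -> K g -> K (fun x => f x + g x)) ->
  (forall f l, K f -> 0 < l -> K (fun x => l * f x)) ->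
  forall n c fs, (forall i, (i < n)%nat -> 0 <= c i /\ K (fs i)) ->
    (exists i, (i < n)%nat /\ 0 < c i) -> K (fun x => rsum n (fun i => c i * fs i x)).
Proof.
  intros Hp Hs.
  assert (Gen : forall n c fs, (forall i, (i < n)%nat -> 0 <= c i /\ K (fs i)) ->
     (forall i, (i < n)%nat -> c i = 0) \/ K (fun x => rsum n (fun i => c i * fs i x))).
  { induction n; intros c fs H.
    - left; intros; lia.
    - destruct (H n (Nat.lt_succ_diag_r n)) as [Hcn HKn].
      destruct (IHn c fs) as [Hz|HK]; [intros; apply H; lia| |].
      + destruct (Req_dec (c n) 0) as [H0|H0].
        * left; intros i Hi. destruct (Nat.eq_dec i n) as [->|]; auto. apply Hz; lia.
        * right. replace (fun x => rsum (S n) (fun i => c i * fs i x)) with (fun x => c n * fs n x).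
          apply Hs; auto. destruct Hcn as [|Hc]; auto. exfalso; apply H0; symmetry; assumption.
          apply functional_extensionality; intro x; simpl. rewrite rsum_zero; [ring|].
          intros i Hi; rewrite Hz; auto; ring.
      + right. destruct (Req_dec (c n) 0) as [H0|H0].
        * replace (fun x => rsum (S n) (fun i => c i * fs i x)) with (fun x => rsum n (fun i => c i * fs i x)); auto.
          apply functional_extensionality; intro x; simpl. rewrite H0; ring.
        * assert (Hc1 : 0 < c n) by (destruct Hcn as [|Hc]; auto; exfalso; apply H0; symmetry; assumption).
          exact (Hp _ _ HK (Hs _ _ HKn Hc1)). }
  intros n c fs H [i [Hi Hci]]. destruct (Gen n c fs H) as [Hz|HK]; auto.
  rewrite Hz in Hci; auto; lra.
Qed.

Lemma good_of_cone {X : Type} (K : (X -> R) -> Prop) :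
  (forall f g, K f -> K g -> K (fun x => f x + g x)) ->
  (forall f l, K f -> 0 < l -> K (fun x => l * f x)) ->
  (forall f, K f -> exists x, 0 < f x) -> good K.
Proof. intros Hp Hs Hpos n c fs H1 H2. apply Hpos. apply cone_comb; auto. Qed.

Lemma rsum_add n1 n2 F : rsum (n1 + n2) F = rsum n1 F + rsum n2 (fun i => F (n1 + i)%nat).
Proof. induction n2; simpl. rewrite Nat.add_0_r; ring. rewrite Nat.add_succ_r; simpl. rewrite IHn2; ring. Qed.

Lemma posi_plus {X} (A : (X -> R) -> Prop) f g : posi A f -> posi A g -> posi A (fun x => f x + g x).
Proof.
  intros [n1 [l1 [fs1 [H1 [H1a H1b]]]]] [n2 [l2 [fs2 [H2 [H2a H2b]]]]].
  exists (n1 + n2)%nat, (fun i => if Nat.ltb i n1 then l1 i else l2 (i - n1)%nat),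
    (fun i => if Nat.ltb i n1 then fs1 i else fs2 (i - n1)%nat).
  split; [lia|split].
  - intros i Hi. destruct (Nat.ltb_spec i n1); [apply H1a; auto| apply H2a; lia].
  - intros x. rewrite rsum_add, H1b, H2b. f_equal.
    + apply rsum_ext; intros i Hi. destruct (Nat.ltb_spec i n1); [auto|lia].
    + apply rsum_ext; intros i Hi. destruct (Nat.ltb_spec (n1 + i) n1); [lia|].
      replace (n1 + i - n1)%nat with i by lia. auto.
Qed.

Lemma posi_scal {X} (A : (X -> R) -> Prop) f l : posi A f -> 0 < l -> posi A (fun x => l * f x).
Proof.
  intros [n [lam [fs [H1 [Ha Hb]]]]] Hl.
  exists n, (fun i => l * lam i), fs. split; [auto|split].
  - intros i Hi; destruct (Ha i Hi); split; auto. apply Rmult_lt_0_compat; auto.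
  - intros x. rewrite Hb, <- rsum_scal. apply rsum_ext; intros; ring.
Qed.

Lemma posi_single {X} (A : (X -> R) -> Prop) f : A f -> posi A f.
Proof. intros H. exists 1%nat, (fun _ => 1), (fun _ => f). split; [lia|split].
 intros; split; [lra|auto]. intros x; simpl; ring. Qed.

Lemma posi_incl {X} (A A' : (X -> R) -> Prop) f : (forall g, A g -> A' g) -> posi A f -> posi A' f.
Proof. intros HA [n [lam [fs [H1 [Ha Hb]]]]]. exists n, lam, fs. split; [auto|split; auto].
 intros i Hi; destruct (Ha i Hi); auto. Qed.

Lemma posi_ext {X} (A : (X -> R) -> Prop) f g : posi A f -> (forall x, f x = g x) -> posi A g.
Proof. intros [n [lam [fs [H1 [Ha Hb]]]]] He. exists n, lam, fs. split; [auto|split; auto].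
 intros x; rewrite <- He; auto. Qed.

Lemma gamble_ext {X} (f g : X -> R) : gamble f -> (forall x, f x = g x) -> gamble g.
Proof. intros [M HM] He. exists M. intros x; rewrite <- He; auto. Qed.

Lemma gamble_rsum {X} n (c : nat -> R) (fs : nat -> X -> R) :
  (forall i, (i < n)%nat -> gamble (fs i)) -> gamble (fun x => rsum n (fun i => c i * fs i x)).
Proof.
  induction n; intros H.
  - exists 0; intros; simpl; rewrite Rabs_R0; lra.
  - destruct IHn as [M HM]; [intros; apply H; lia|].
    destruct (H n (Nat.lt_succ_diag_r n)) as [M' HM'].
    exists (M + Rabs (c n) * M'). intros x; simpl.
    eapply Rle_trans; [apply Rabs_triang|]. rewrite Rabs_mult.
    apply Rplus_le_compat; auto. apply Rmult_le_compat_l; auto. apply Rabs_pos.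
Qed.

Lemma indic_01 {X} (B : X -> bool) x : 0 <= indic B x <= 1.
Proof. unfold indic; destruct (B x); lra. Qed.

Lemma gamble_mul_indic {X} (f : X -> R) (h : X -> R) :
  gamble f -> (forall x, 0 <= h x <= 1) -> gamble (fun x => f x * h x).
Proof. intros [M HM] Hh. exists M. intros x. rewrite Rabs_mult.
 specialize (HM x); specialize (Hh x).
 assert (Rabs (h x) <= 1) by (rewrite Rabs_pos_eq; lra).
 pose proof (Rabs_pos (f x)). pose proof (Rabs_pos (h x)). nra. Qed.

Lemma not_le_pos {X} (f : X -> R) : ~ (forall x, f x <= 0) -> exists x, 0 < f x.
Proof. intros H. apply NNPP; intro H2. apply H; intro x. apply Rnot_lt_le; intro; apply H2; eauto. Qed.

Record trm (X1 X2 : Type) := mkT { twa : R; twb : R; ta : X2 -> R; tE : X1 -> bool;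
  tb : X1 -> R; tF : X2 -> bool; th : X1 * X2 -> R }.
Arguments twa {X1 X2}. Arguments twb {X1 X2}. Arguments ta {X1 X2}. Arguments tE {X1 X2}.
Arguments tb {X1 X2}. Arguments tF {X1 X2}. Arguments th {X1 X2}.

Lemma lsum_zero {X} (L : list (R * X)) : lsum L (fun _ => 0) = 0.
Proof. induction L as [|[v x] L IH]; simpl; [auto|rewrite IH; ring]. Qed.

Lemma lsum_nonneg {X} (L : list (R * X)) f : (forall v x, In (v, x) L -> 0 <= v) ->
  (forall x, 0 <= f x) -> 0 <= lsum L f.
Proof. intros Hw H. rewrite <- (lsum_zero L). apply lsum_le; auto. Qed.

Lemma indic_true {X} (B : X -> bool) x : B x = true -> indic B x = 1.
Proof. unfold indic; intros ->; auto. Qed.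

Lemma main_claim {X1 X2 : Type} (x1 : X1) (x2 : X2)
  (B1s : (X1 -> bool) -> Prop) (B2s : (X2 -> bool) -> Prop)
  (hB1 : forall B, B1s B -> nonempty_event B) (hB2 : forall B, B2s B -> nonempty_event B)
  (S1 : (X1 -> R) -> Prop) (S2 : (X2 -> R) -> Prop) (g1 : good S1) (g2 : good S2)
  (b0 : X1 -> R) (a0 : X2 -> R) (hb0 : S1 b0) (ha0 : S2 a0) :
  forall g, dprod B1s B2s S1 S2 g -> exists p, 0 < g p.
Proof.
  intros g [n [c [fs [Hn [Hfs Hg]]]]].
  assert (Hex : forall i, exists t : trm X1 X2, (i < n)%nat ->
    0 <= twa t /\ 0 <= twb t /\ S2 (ta t) /\ S1 (tb t) /\ nonempty_event (tE t) /\
    nonempty_event (tF t) /\ (forall p, 0 <= th t p) /\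
    (forall p, fs i p = twa t * (ta t (snd p) * indic (tE t) (fst p))
                        + twb t * (tb t (fst p) * indic (tF t) (snd p)) + th t p) /\
    (0 < twa t \/ 0 < twb t \/ exists p, 0 < th t p)).
  { intros i. destruct (Compare_dec.lt_dec i n) as [Hi|Hi].
    2:{ exists (mkT _ _ 0 0 a0 (fun _ => true) b0 (fun _ => true) (fun _ => 0)). intros; lia. }
    destruct (Hfs i Hi) as [Hci [[HA|HA]|HA]].
    - destruct HA as [f2 [B1 [Hf2 [HB1 Heq]]]].
      exists (mkT _ _ 1 0 f2 B1 b0 (fun _ => true) (fun _ => 0)). intros _; simpl.
      refine (conj _ (conj _ (conj _ (conj _ (conj _ (conj _ (conj _ (conj _ _)))))))); [lra|lra|auto|auto| | |intros; lra| | ].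
      + destruct HB1 as [HB1| ->]; [apply hB1; auto| exists x1; auto].
      + exists x2; auto.
      + intros p; rewrite Heq; ring.
      + left; lra.
    - destruct HA as [f1 [B2 [Hf1 [HB2 Heq]]]].
      exists (mkT _ _ 0 1 a0 (fun _ => true) f1 B2 (fun _ => 0)). intros _; simpl.
      refine (conj _ (conj _ (conj _ (conj _ (conj _ (conj _ (conj _ (conj _ _)))))))); [lra|lra|auto|auto| | |intros; lra| | ].
      + exists x1; auto.
      + destruct HB2 as [HB2| ->]; [apply hB2; auto| exists x2; auto].
      + intros p; rewrite Heq; ring.
      + right; left; lra.
    - destruct HA as [_ [Hnn [p Hp]]].
      exists (mkT _ _ 0 0 a0 (fun _ => true) b0 (fun _ => true) (fs i)). intros _; simpl.
      refine (conj _ (conj _ (conj _ (conj _ (conj _ (conj _ (conj _ (conj _ _)))))))); [lra|lra|auto|auto| | |intros q; apply Hnn| | ].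
      + exists x1; auto.
      + exists x2; auto.
      + intros q; ring.
      + right; right; exists p. specialize (Hnn p). lra. }
  destruct (choice _ Hex) as [T HT].
  pose (wa := fun i => twa (T i)). pose (wb := fun i => twb (T i)).
  pose (a := fun i => ta (T i)). pose (E := fun i => tE (T i)).
  pose (b := fun i => tb (T i)). pose (F := fun i => tF (T i)). pose (h := fun i => th (T i)).
  assert (Hrep : forall p, g p = rsum n (fun i => c i * (wa i * (a i (snd p) * indic (E i) (fst p))
      + wb i * (b i (fst p) * indic (F i) (snd p)) + h i p))).
  { intros p. rewrite Hg. apply rsum_ext. intros i Hi. destruct (HT i Hi) as (_&_&_&_&_&_&_&He&_).
    rewrite He. reflexivity. }
  assert (Hc : forall i, (i < n)%nat -> 0 < c i) by (intros i Hi; apply (Hfs i Hi)).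
  assert (Hwa : forall i, (i < n)%nat -> 0 <= wa i) by (intros i Hi; apply (HT i Hi)).
  assert (Hwb : forall i, (i < n)%nat -> 0 <= wb i) by (intros i Hi; apply (HT i Hi)).
  assert (Ha : forall i, (i < n)%nat -> S2 (a i)) by (intros i Hi; apply (HT i Hi)).
  assert (Hb : forall i, (i < n)%nat -> S1 (b i)) by (intros i Hi; apply (HT i Hi)).
  assert (HE : forall i, (i < n)%nat -> nonempty_event (E i)) by (intros i Hi; apply (HT i Hi)).
  assert (HF : forall i, (i < n)%nat -> nonempty_event (F i)) by (intros i Hi; apply (HT i Hi)).
  assert (Hh : forall i, (i < n)%nat -> forall p, 0 <= h i p) by (intros i Hi; apply (HT i Hi)).
  assert (Hnz : forall i, (i < n)%nat -> 0 < wa i \/ 0 < wb i \/ exists p, 0 < h i p)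
    by (intros i Hi; apply (HT i Hi)).
  clearbody wa wb a E b F h. clear HT Hex Hg Hfs.
  apply not_le_pos. intros Hle.
  destruct (classic (exists i0, (i0 < n)%nat /\ 0 < wa i0)) as [[i0 [Hi0 Hwa0]]|HnA].
  -
    destruct (ville n X2 a) as [L [HLw HLa]].
    { intros c' Hc' Hc'p. apply (g2 n c' a); auto. }
    pose (Lam := fun y1 => lsum L (fun y2 => g (y1, y2))).
    assert (HLam0 : forall y1, Lam y1 <= 0).
    { intros y1. unfold Lam. rewrite <- (lsum_zero L). apply lsum_le; auto. }
    pose (e := fun i => c i * wb i * lsum L (indic (F i))).
    assert (He0 : forall i, (i < n)%nat -> 0 <= e i).
    { intros i Hi. unfold e. apply Rmult_le_pos. apply Rmult_le_pos; [left; auto|auto].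
      apply lsum_nonneg; auto. intros; apply indic_01. }
    assert (HLow : forall y1, rsum n (fun i => c i * wa i * indic (E i) y1 * lsum L (a i))
                     + rsum n (fun i => e i * b i y1) <= Lam y1).
    { intros y1. unfold Lam. rewrite (lsum_ext L _ (fun y2 => rsum n (fun i =>
         c i * (wa i * (a i y2 * indic (E i) y1) + wb i * (b i y1 * indic (F i) y2) + h i (y1, y2)))))
         by (intros; apply Hrep).
      rewrite lsum_rsum, <- rsum_plus. apply rsum_le. intros i Hi.
      rewrite (lsum_ext L (fun y2 => c i * (wa i * (a i y2 * indic (E i) y1) + wb i * (b i y1 * indic (F i) y2) + h i (y1, y2))) (fun y2 => (c i * wa i * indic (E i) y1) * a i y2
           + (c i * wb i * b i y1) * indic (F i) y2 + (fun y2 => c i * h i (y1, y2)) y2)) by (intros; ring).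
      rewrite lsum_lin. unfold e.
      assert (0 <= lsum L (fun y2 => c i * h i (y1, y2))).
      { apply lsum_nonneg; auto. intros y2. apply Rmult_le_pos; [left; auto| apply Hh; auto]. }
      nra. }
    destruct (classic (exists i, (i < n)%nat /\ 0 < e i)) as [He1|He1].
    + destruct (g1 n e b) as [y1 Hy1]; auto.
      specialize (HLow y1). specialize (HLam0 y1).
      assert (0 <= rsum n (fun i => c i * wa i * indic (E i) y1 * lsum L (a i))).
      { apply rsum_nonneg. intros i Hi. apply Rmult_le_pos; [|left; apply HLa; auto].
        apply Rmult_le_pos; [apply Rmult_le_pos; [left; auto|auto]|apply indic_01]. }
      lra.
    + destruct (HE i0 Hi0) as [y1 Hy1].
      specialize (HLow y1). specialize (HLam0 y1).
      rewrite (rsum_zero n (fun i => e i * b i y1)) in HLow.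
      2:{ intros i Hi. assert (e i = 0). { destruct (He0 i Hi) as [Hp|Hp]; auto. exfalso; apply He1; eauto. }
          rewrite H; ring. }
      assert (0 < rsum n (fun i => c i * wa i * indic (E i) y1 * lsum L (a i))).
      { apply (rsum_pos _ _ i0); auto.
        - intros i Hi. apply Rmult_le_pos; [|left; apply HLa; auto].
          apply Rmult_le_pos; [apply Rmult_le_pos; [left; auto|auto]|apply indic_01].
        - rewrite indic_true; auto. rewrite Rmult_1_r. apply Rmult_lt_0_compat; [|apply HLa; auto].
          apply Rmult_lt_0_compat; auto. }
      lra.
  - assert (Hwa0 : forall i, (i < n)%nat -> wa i = 0).
    { intros i Hi. destruct (Hwa i Hi) as [Hp|Hp]; auto. exfalso; apply HnA; eauto. }
    destruct (classic (exists i1, (i1 < n)%nat /\ 0 < wb i1)) as [[i1 [Hi1 Hwb1]]|HnB].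
    + destruct (HF i1 Hi1) as [y2 Hy2].
      destruct (g1 n (fun i => c i * wb i * indic (F i) y2) b) as [y1 Hy1].
      { intros i Hi. split; auto. apply Rmult_le_pos; [apply Rmult_le_pos; [left; auto|auto]|apply indic_01]. }
      { exists i1. split; auto. rewrite indic_true; auto. rewrite Rmult_1_r. apply Rmult_lt_0_compat; auto. }
      specialize (Hle (y1, y2)). rewrite Hrep in Hle. simpl in Hle.
      assert (rsum n (fun i => c i * wb i * indic (F i) y2 * b i y1) <=
        rsum n (fun i => c i * (wa i * (a i y2 * indic (E i) y1) + wb i * (b i y1 * indic (F i) y2) + h i (y1, y2)))).
      { apply rsum_le. intros i Hi. rewrite Hwa0 by auto.
        assert (0 <= h i (y1, y2)) by (apply Hh; auto).
        assert (0 < c i) by auto. nra. }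
      lra.
    + assert (Hwb0 : forall i, (i < n)%nat -> wb i = 0).
      { intros i Hi. destruct (Hwb i Hi) as [Hp|Hp]; auto. exfalso; apply HnB; eauto. }
      assert (H0n : (0 < n)%nat) by lia.
      destruct (Hnz 0%nat H0n) as [Hp|[Hp|[p Hp]]].
      * rewrite Hwa0 in Hp; auto; lra.
      * rewrite Hwb0 in Hp; auto; lra.
      * specialize (Hle p). rewrite Hrep in Hle.
        assert (0 < rsum n (fun i => c i * (wa i * (a i (snd p) * indic (E i) (fst p)) +
          wb i * (b i (fst p) * indic (F i) (snd p)) + h i p))); [|lra].
        apply (rsum_pos _ _ 0%nat); auto.
        -- intros i Hi. rewrite Hwa0, Hwb0 by auto. assert (0 <= h i p) by auto.
           assert (0 < c i) by auto. nra.
        -- rewrite Hwa0, Hwb0 by auto. assert (0 < c 0%nat) by auto. nra.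
Qed.

Definition cone_ok {X : Type} (S : (X -> R) -> Prop) : Prop :=
  (forall f g, S f -> S g -> S (fun x => f x + g x)) /\
  (forall f l, S f -> 0 < l -> S (fun x => l * f x)) /\
  (forall f, pos_gamble f -> S f) /\
  (forall f, S f -> gamble f) /\
  (forall f, S f -> exists x, 0 < f x).

Lemma good_cone {X} (S : (X -> R) -> Prop) : cone_ok S -> good S.
Proof. intros (H1&H2&_&_&H5). apply good_of_cone; auto. Qed.

Lemma gamble_lin {X} (f g : X -> R) a b : gamble f -> gamble g -> gamble (fun x => a * f x + b * g x).
Proof. intros [M HM] [N HN]. exists (Rabs a * M + Rabs b * N). intros x.
  eapply Rle_trans; [apply Rabs_triang|]. rewrite !Rabs_mult.
  apply Rplus_le_compat; apply Rmult_le_compat_l; auto; apply Rabs_pos. Qed.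

Lemma gamble_const {X} (r : R) : @gamble X (fun _ => r).
Proof. exists (Rabs r). intros; lra. Qed.

Lemma pos_gamble_indic {X} (B : X -> bool) : nonempty_event B -> pos_gamble (indic B).
Proof. intros [x Hx]. split; [exists 1; intros y; rewrite Rabs_pos_eq; apply indic_01|split].
  intros; apply indic_01. exists x. rewrite indic_true; auto; lra. Qed.

Lemma coherent_cone {X} (W : (X -> R) -> Prop) : coherent_D W -> cone_ok W.
Proof. intros (H1&H2&H3&H4&H5). split; [auto|split; [auto|split; [|split; [auto|]]]].
  - intros f (Hg&Hn&Hz). apply H2; auto.
  - intros f Hf. apply not_le_pos. intros Hle. apply (H5 f Hle Hf). Qed.

Lemma lub_gt (E : R -> Prop) mu : Rbar_lt (Finite mu) (Lub_Rbar E) -> exists m, E m /\ mu < m.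
Proof. intros Hlt. apply NNPP; intro Hno.
  assert (Hub : is_ub_Rbar E (Finite mu)).
  { intros x Ex. simpl. apply Rnot_lt_le. intro; apply Hno; eauto. }
  pose proof ((proj2 (Lub_Rbar_correct E)) _ Hub) as Hle.
  apply (Rbar_lt_not_le _ _ Hlt Hle). Qed.

Lemma E_sub {X} (C : (X -> R) -> (X -> bool) -> Prop) P (W : (X -> R) -> Prop) :
  coherent_D W -> sub_CX C -> (forall f B, C f B -> P f B = lowprev_D W f B) ->
  forall g, E_of_P C P g -> W g.
Proof.
  intros cW hC hW g [n [lam [fs [Hn [Hfs Hg]]]]].
  destruct cW as (W1&W2&W3&W4&W5).
  replace g with (fun x => rsum n (fun i => lam i * fs i x)) by (apply functional_extensionality; intros; auto).
  apply cone_comb; auto.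
  2:{ exists 0%nat; split; [lia|apply (Hfs 0%nat); lia]. }
  intros i Hi. destruct (Hfs i Hi) as [Hl [HA|HA]]. split; [lra|].
  - destruct HA as [f [B [mu [HC [Hlt ->]]]]].
    rewrite (hW f B HC) in Hlt. unfold lowprev_D in Hlt.
    destruct (lub_gt _ _ Hlt) as [m [Hm Hmu]].
    replace (cgamble f mu B) with (fun x => cgamble f m B x + (m - mu) * indic B x).
    + apply W4; auto. apply W3; [|lra]. destruct (hC f B HC) as [_ HB].
      destruct (pos_gamble_indic B HB) as (a1&a2&a3). apply W2; auto.
    + apply functional_extensionality; intros x; unfold cgamble; ring.
  - split; [lra|]. destruct HA as (a1&a2&a3). apply W2; auto.
Qed.

Lemma E_cone {X} (C : (X -> R) -> (X -> bool) -> Prop) P :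
  sub_CX C -> coherent_lp C P -> cone_ok (E_of_P C P).
Proof.
  intros hC [W [cW hW]].
  pose proof (E_sub C P W cW hC hW) as Hs. destruct (coherent_cone W cW) as (_&_&_&H4&H5).
  split; [|split; [|split; [|split]]].
  - intros; apply posi_plus; auto.
  - intros; apply posi_scal; auto.
  - intros f Hf; apply posi_single; right; auto.
  - intros f Hf; apply H4; auto.
  - intros f Hf; apply H5; auto.
Qed.

Lemma dprod_coherent {X1 X2 : Type} (x1 : X1) (x2 : X2)
  (B1s : (X1 -> bool) -> Prop) (B2s : (X2 -> bool) -> Prop)
  (hB1 : forall B, B1s B -> nonempty_event B) (hB2 : forall B, B2s B -> nonempty_event B)
  (S1 : (X1 -> R) -> Prop) (S2 : (X2 -> R) -> Prop) (c1 : cone_ok S1) (c2 : cone_ok S2) :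
  coherent_D (dprod B1s B2s S1 S2).
Proof.
  assert (hb0 : S1 (fun _ => 1)).
  { apply c1. split; [apply gamble_const|split; [intros; lra|exists x1; lra]]. }
  assert (ha0 : S2 (fun _ => 1)).
  { apply c2. split; [apply gamble_const|split; [intros; lra|exists x2; lra]]. }
  split; [|split; [|split; [|split]]].
  - intros g [n [lam [fs [Hn [Hfs Hg]]]]].
    eapply gamble_ext; [|intros x; symmetry; apply Hg].
    apply gamble_rsum. intros i Hi. destruct (Hfs i Hi) as [_ [[HA|HA]|HA]].
    + destruct HA as [f2 [B1 [Hf2 [_ ->]]]]. apply gamble_mul_indic.
      * destruct (proj1 (proj2 (proj2 (proj2 c2))) f2 Hf2) as [M HM]. exists M; intros; apply HM.
      * intros; apply indic_01.
    + destruct HA as [f1 [B2 [Hf1 [_ ->]]]]. apply gamble_mul_indic.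
      * destruct (proj1 (proj2 (proj2 (proj2 c1))) f1 Hf1) as [M HM]. exists M; intros; apply HM.
      * intros; apply indic_01.
    + apply HA.
  - intros f Hg Hn Hz. apply posi_single. right. split; auto.
  - intros; apply posi_scal; auto.
  - intros; apply posi_plus; auto.
  - intros f Hle Hf.
    destruct (main_claim x1 x2 B1s B2s hB1 hB2 S1 S2 (good_cone _ c1) (good_cone _ c2) _ _ hb0 ha0 f Hf) as [p Hp].
    specialize (Hle p); lra.
Qed.

Lemma cond_lemma {X1 X2 : Type} (x1 : X1) (x2 : X2)
  (B1s : (X1 -> bool) -> Prop) (B2s : (X2 -> bool) -> Prop)
  (hB1 : forall B, B1s B -> nonempty_event B) (hB2 : forall B, B2s B -> nonempty_event B)
  (S1 : (X1 -> R) -> Prop) (S2 : (X2 -> R) -> Prop) (c1 : cone_ok S1) (c2 : cone_ok S2)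
  (k : X1 -> R) (B : X2 -> bool) (hk : gamble k) (hB : B2s B \/ B = (fun _ => true)) :
  dprod B1s B2s S1 S2 (fun p => k (fst p) * indic B (snd p)) <-> S1 k.
Proof.
  split.
  2:{ intros Hk. apply posi_single. left; right. exists k, B. auto. }
  intros Hd. apply NNPP; intro Hk.
  destruct c1 as (P1&P2&P3&P4&P5).
  assert (ha0 : S2 (fun _ => 1)).
  { apply c2. split; [apply gamble_const|split; [intros; lra|exists x2; lra]]. }
  destruct (classic (exists x, k x <> 0)) as [Hnz|Hz].
  2:{ assert (hb0 : S1 (fun _ => 1)).
      { apply P3. split; [apply gamble_const|split; [intros; lra|exists x1; lra]]. }
      destruct (main_claim x1 x2 B1s B2s hB1 hB2 S1 S2 (good_cone _ (conj P1 (conj P2 (conj P3 (conj P4 P5)))))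
        (good_cone _ c2) _ _ hb0 ha0 _ Hd) as [p Hp].
      assert (k (fst p) = 0) by (apply NNPP; intro; apply Hz; eauto).
      rewrite H in Hp; lra. }
  pose (Z := fun d : X1 -> R => S1 d \/ forall x, d x = 0).
  pose (S1' := fun f : X1 -> R => exists l d, 0 <= l /\ Z d /\ (0 < l \/ S1 d) /\ forall x, f x = d x - l * k x).
  assert (Sext : forall f g, S1 f -> (forall x, f x = g x) -> S1 g).
  { intros f g Hf He. replace g with f; auto. apply functional_extensionality; auto. }
  assert (ZS : forall d1 d2, S1 d1 -> Z d2 -> S1 (fun x => d1 x + d2 x)).
  { intros d1 d2 H1 [H2|H2]; auto. apply (Sext d1); auto. intros; rewrite H2; ring. }
  assert (ZZ : forall d1 d2, Z d1 -> Z d2 -> Z (fun x => d1 x + d2 x)).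
  { intros d1 d2 [H1|H1] H2. left; apply ZS; auto.
    destruct H2 as [H2|H2]. left; apply (Sext d2); auto; intros; rewrite H1; ring.
    right; intros; rewrite H1, H2; ring. }
  assert (gS1' : good S1').
  { apply good_of_cone.
    - intros f g (l1&d1&Hl1&Hd1&Ho1&He1) (l2&d2&Hl2&Hd2&Ho2&He2).
      exists (l1 + l2), (fun x => d1 x + d2 x). split; [lra|split; [apply ZZ; auto|split]].
      + destruct Ho1 as [Ho1|Ho1]; [left; lra|]. destruct Ho2 as [Ho2|Ho2]; [left; lra|].
        right; apply ZS; auto; left; auto.
      + intros x; rewrite He1, He2; ring.
    - intros f l (l1&d1&Hl1&Hd1&Ho1&He1) Hl. exists (l * l1), (fun x => l * d1 x).
      split; [nra|split; [|split]].
      + destruct Hd1 as [Hd1|Hd1]; [left; apply P2; auto|right; intros; rewrite Hd1; ring].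
      + destruct Ho1 as [Ho1|Ho1]; [left; nra|right; apply P2; auto].
      + intros x; rewrite He1; ring.
    - intros f (l&d&Hl&Hzd&Ho&He). apply not_le_pos. intros Hle.
      destruct (Req_dec l 0) as [Hl0|Hl0].
      + destruct Ho as [Ho|Ho]; [lra|]. destruct (P5 d Ho) as [x Hx].
        specialize (Hle x). rewrite He, Hl0 in Hle. lra.
      + assert (Hlp : 0 < l) by lra.
        apply Hk.
        destruct Hzd as [Hzd|Hzd].
        * pose (r := fun x => k x - / l * d x).
          assert (Hr : forall x, 0 <= r x).
          { intros x. specialize (Hle x). rewrite He in Hle. unfold r.
            assert (d x <= l * k x) by lra.
            assert (/ l * d x <= / l * (l * k x)) by (apply Rmult_le_compat_l; auto; left; apply Rinv_0_lt_compat; auto).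
            replace (/ l * (l * k x)) with (k x) in H0 by (field; lra). lra. }
          destruct (classic (exists x, r x <> 0)) as [Hrn|Hrz].
          -- apply (Sext (fun x => (fun x => / l * d x) x + r x)).
             ++ apply P1. apply P2; auto. apply Rinv_0_lt_compat; auto.
                apply P3. split; [|split; auto]. apply (gamble_ext (fun x => 1 * k x + (- / l) * d x)); [apply gamble_lin; auto|intros; unfold r; ring].
             ++ intros; unfold r; ring.
          -- apply (Sext (fun x => / l * d x)).
             ++ apply P2; auto. apply Rinv_0_lt_compat; auto.
             ++ intros x. assert (r x = 0) by (apply NNPP; intro; apply Hrz; eauto). unfold r in H. lra.
        * apply P3. split; auto. split; auto.
          intros x. specialize (Hle x). rewrite He, Hzd in Hle. nra. }
  assert (Hmk : S1' (fun x => - k x)).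
  { exists 1, (fun _ => 0). split; [lra|split; [right; auto|split; [left; lra|intros; ring]]]. }
  assert (Hd' : dprod B1s B2s S1' S2 (fun p => k (fst p) * indic B (snd p) + (fun x => - k x) (fst p) * indic B (snd p))).
  { apply posi_plus.
    - eapply posi_incl; [|apply Hd]. intros g [[HA|HA]|HA]; [left; left; auto| |right; auto].
      left; right. destruct HA as [f1 [B2 [Hf1 [HB2 ->]]]]. exists f1, B2. split; auto.
      exists 0, f1. split; [lra|split; [left; auto|split; [right; auto|intros; ring]]].
    - apply posi_single. left; right. exists (fun x => - k x), B. auto. }
  destruct (main_claim x1 x2 B1s B2s hB1 hB2 S1' S2 gS1' (good_cone _ c2) _ _ Hmk ha0 _ Hd') as [p Hp].
  lra.
Qed.

Definition swapf {X1 X2 : Type} (g : X1 * X2 -> R) : X2 * X1 -> R := fun q => g (snd q, fst q).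

Lemma dprod_swap {X1 X2 : Type} (B1s : (X1 -> bool) -> Prop) (B2s : (X2 -> bool) -> Prop)
  (S1 : (X1 -> R) -> Prop) (S2 : (X2 -> R) -> Prop) g :
  dprod B1s B2s S1 S2 g -> dprod B2s B1s S2 S1 (swapf g).
Proof.
  intros [n [lam [fs [Hn [Hfs Hg]]]]].
  exists n, lam, (fun i => swapf (fs i)). split; [auto|split].
  - intros i Hi. destruct (Hfs i Hi) as [Hl [[HA|HA]|HA]]; split; auto.
    + left; right. destruct HA as [f2 [B1 [Hf2 [HB1 ->]]]]. exists f2, B1. auto.
    + left; left. destruct HA as [f1 [B2 [Hf1 [HB2 ->]]]]. exists f1, B2. auto.
    + right. destruct HA as ([M HM]&Hn'&[p Hp]). split; [exists M; intros; apply HM|split].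
      * intros; apply Hn'.
      * exists (snd p, fst p). unfold swapf. simpl. destruct p; auto.
  - intros q. unfold swapf at 1. rewrite Hg. auto.
Qed.

Lemma cond_lemma2 {X1 X2 : Type} (x1 : X1) (x2 : X2)
  (B1s : (X1 -> bool) -> Prop) (B2s : (X2 -> bool) -> Prop)
  (hB1 : forall B, B1s B -> nonempty_event B) (hB2 : forall B, B2s B -> nonempty_event B)
  (S1 : (X1 -> R) -> Prop) (S2 : (X2 -> R) -> Prop) (c1 : cone_ok S1) (c2 : cone_ok S2)
  (k : X2 -> R) (B : X1 -> bool) (hk : gamble k) (hB : B1s B \/ B = (fun _ => true)) :
  dprod B1s B2s S1 S2 (fun p => k (snd p) * indic B (fst p)) <-> S2 k.
Proof.
  rewrite <- (cond_lemma x2 x1 B2s B1s hB2 hB1 S2 S1 c2 c1 k B hk hB).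
  split; intros H.
  - apply dprod_swap in H. exact H.
  - apply dprod_swap in H. eapply posi_ext; [apply H|]. intros [a b]. unfold swapf; simpl. auto.
Qed.

Lemma lub_eq (E F : R -> Prop) : (forall x, E x -> F x) ->
  (forall x : R, Rbar_lt x (Lub_Rbar F) -> E x) -> Lub_Rbar E = Lub_Rbar F.
Proof.
  intros HEF HFE. apply Rbar_le_antisym.
  - apply (proj2 (Lub_Rbar_correct E)). intros x Ex. apply (proj1 (Lub_Rbar_correct F)); auto.
  - apply Rbar_not_lt_le. intros Hlt.
    assert (Hub := proj1 (Lub_Rbar_correct E)).
    assert (Hm : exists mu : R, Rbar_lt (Lub_Rbar E) mu /\ Rbar_lt mu (Lub_Rbar F)).
    { destruct (Lub_Rbar E) as [l| |], (Lub_Rbar F) as [r| |]; simpl in Hlt |- *; try contradiction.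
      - exists ((l + r) / 2); split; lra.
      - exists (l + 1); split; [lra|auto].
      - exists (r - 1); split; [auto|lra].
      - exists 0; split; auto. }
    destruct Hm as [mu [H1 H2]].
    specialize (Hub mu (HFE mu H2)).
    apply (Rbar_lt_not_le _ _ H1 Hub).
Qed.

Lemma gamble_cg {X} (f : X -> R) mu B : gamble f -> gamble (cgamble f mu B).
Proof. intros Hf. unfold cgamble. apply gamble_mul_indic; [|intros; apply indic_01].
  apply (gamble_ext (fun x => 1 * f x + (- mu) * (fun _ => 1) x)); [apply gamble_lin; auto; apply gamble_const|intros; simpl; ring]. Qed.

Theorem proposition44 (X1 X2 : Type) (x1 : X1) (x2 : X2)
  (B1s : (X1 -> bool) -> Prop) (B2s : (X2 -> bool) -> Prop)
  (hB1 : forall B, B1s B -> nonempty_event B)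
  (hB2 : forall B, B2s B -> nonempty_event B)
  (C1 : (X1 -> R) -> (X1 -> bool) -> Prop) (P1 : (X1 -> R) -> (X1 -> bool) -> Rbar)
  (C2 : (X2 -> R) -> (X2 -> bool) -> Prop) (P2 : (X2 -> R) -> (X2 -> bool) -> Rbar)
  (hC1 : sub_CX C1) (hP1 : coherent_lp C1 P1)
  (hC2 : sub_CX C2) (hP2 : coherent_lp C2 P2)
  (C : (X1 * X2 -> R) -> (X1 * X2 -> bool) -> Prop)
  (hC : sub_CX C) (hind : indep_domain B1s B2s C)
  (hC1C : forall f B, C1 f B -> C (ext1 f) (eext1 B))
  (hC2C : forall f B, C2 f B -> C (ext2 f) (eext2 B)) :
  indep_product B1s B2s C1 P1 C2 P2 C (lp_prod B1s B2s C1 P1 C2 P2).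
Proof.
  pose proof (E_cone C1 P1 hC1 hP1) as c1.
  pose proof (E_cone C2 P2 hC2 hP2) as c2.
  destruct hP1 as [W1 [cW1 hW1]]. destruct hP2 as [W2 [cW2 hW2]].
  pose proof (E_sub C1 P1 W1 cW1 hC1 hW1) as s1.
  pose proof (E_sub C2 P2 W2 cW2 hC2 hW2) as s2.
  set (E1 := E_of_P C1 P1) in *. set (E2 := E_of_P C2 P2) in *.
  assert (K1 : forall f mu B, gamble f -> (dprod B1s B2s E1 E2 (cgamble (ext1 f) mu (eext1 B)) <-> E1 (cgamble f mu B))).
  { intros f mu B Hf. rewrite <- (cond_lemma x1 x2 B1s B2s hB1 hB2 E1 E2 c1 c2 (cgamble f mu B) (fun _ => true)); [|apply gamble_cg; auto|right; auto].
    replace (cgamble (ext1 f) mu (eext1 B)) with (fun p : X1 * X2 => cgamble f mu B (fst p) * indic (fun _ => true) (snd p)); [tauto|].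
    apply functional_extensionality; intros p. unfold cgamble, ext1, eext1, indic. ring. }
  assert (K2 : forall f mu B, gamble f -> (dprod B1s B2s E1 E2 (cgamble (ext2 f) mu (eext2 B)) <-> E2 (cgamble f mu B))).
  { intros f mu B Hf. rewrite <- (cond_lemma2 x1 x2 B1s B2s hB1 hB2 E1 E2 c1 c2 (cgamble f mu B) (fun _ => true)); [|apply gamble_cg; auto|right; auto].
    replace (cgamble (ext2 f) mu (eext2 B)) with (fun p : X1 * X2 => cgamble f mu B (snd p) * indic (fun _ => true) (fst p)); [tauto|].
    apply functional_extensionality; intros p. unfold cgamble, ext2, eext2, indic. ring. }
  split; [split; [auto|split; [auto|split; [|split]]]|split].
  - exists (dprod B1s B2s E1 E2). split; [apply dprod_coherent; auto|]. intros; reflexivity.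
  - intros f1 B1 B2 [Hf1 _] _ HB2. unfold lp_prod, lowprev_D; fold E1 E2. apply Lub_Rbar_eqset. intros mu.
    rewrite (K1 f1 mu B1 Hf1).
    rewrite <- (cond_lemma x1 x2 B1s B2s hB1 hB2 E1 E2 c1 c2 (cgamble f1 mu B1) B2); [|apply gamble_cg; auto|left; auto].
    replace (cgamble (ext1 f1) mu (erect B1 B2)) with (fun p : X1 * X2 => cgamble f1 mu B1 (fst p) * indic B2 (snd p)); [tauto|].
    apply functional_extensionality; intros p. unfold cgamble, ext1, erect, indic.
    destruct (B1 (fst p)), (B2 (snd p)); simpl; ring.
  - intros f2 B2 B1 [Hf2 _] _ HB1. unfold lp_prod, lowprev_D; fold E1 E2. apply Lub_Rbar_eqset. intros mu.
    rewrite (K2 f2 mu B2 Hf2).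
    rewrite <- (cond_lemma2 x1 x2 B1s B2s hB1 hB2 E1 E2 c1 c2 (cgamble f2 mu B2) B1); [|apply gamble_cg; auto|left; auto].
    replace (cgamble (ext2 f2) mu (erect B1 B2)) with (fun p : X1 * X2 => cgamble f2 mu B2 (snd p) * indic B1 (fst p)); [tauto|].
    apply functional_extensionality; intros p. unfold cgamble, ext2, erect, indic.
    destruct (B1 (fst p)), (B2 (snd p)); simpl; ring.
  - intros f B HCfB. destruct (hC1 f B HCfB) as [Hf _].
    unfold lp_prod, lowprev_D; fold E1 E2. rewrite (hW1 f B HCfB). unfold lowprev_D.
    rewrite (Lub_Rbar_eqset _ (fun mu => E1 (cgamble f mu B))) by (intros; apply K1; auto).
    apply lub_eq; [intros; apply s1; auto|].
    intros mu Hmu. apply posi_single. left. exists f, B, mu. split; [auto|split; [|auto]].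
    rewrite (hW1 f B HCfB). exact Hmu.
  - intros f B HCfB. destruct (hC2 f B HCfB) as [Hf _].
    unfold lp_prod, lowprev_D; fold E1 E2. rewrite (hW2 f B HCfB). unfold lowprev_D.
    rewrite (Lub_Rbar_eqset _ (fun mu => E2 (cgamble f mu B))) by (intros; apply K2; auto).
    apply lub_eq; [intros; apply s2; auto|].
    intros mu Hmu. apply posi_single. left. exists f, B, mu. split; [auto|split; [|auto]].
    rewrite (hW2 f B HCfB). exact Hmu.
Qed.
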